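(* Let $\mathbf{P}=\{p_n(x)\}_{n\ge0}$ be the Sheffer sequence for the pair $(g(t),f(t))$. Then, as formal power series in $t$ (with coefficients rational functions of $x$), $$\sum_{n=0}^{\infty}A_n(x;\mathbf{P})\frac{t^n}{n!}=\frac{(1-x)\,e^{\bar f((1-x)t)}}{g\big(\bar f((1-x)t)\big)}\cdot\frac{1}{1-x\,e^{\bar f((1-x)t)}}.$$
   Context: $g,f$ are formal power series over $\mathbb{C}$ with $g(0)\ne0$, $f(0)=0$, $f'(0)\ne0$; $\bar f$ is the compositional inverse of $f$. $\{p_n\}$ is Sheffer for $(g,f)$ iff $\sum_{n\ge0}p_n(x)\frac{t^n}{n!}=\frac{1}{g(\bar f(t))}e^{x\bar f(t)}$. The Eulerian numbers $A_{n,k}(\mathbf{P})$ ($0\le k\le n$) are the unique coefficients with $p_n(x)=\sum_{k=0}^{n}A_{n,k}(\mathbf{P})\binom{x+n-k-1}{n}$, where $\binom{y}{n}=y(y-1)\cdots(y-n+1)/n!$, and $A_n(x;\mathbf{P})=\sum_{k=0}^n A_{n,k}(\mathbf{P})x^k$. *)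

(* Defs.v *)
From HB Require Import structures.
From mathcomp Require Import all_boot all_order all_algebra.
Set Implicit Arguments. Unset Strict Implicit. Unset Printing Implicit Defensive.
Import Order.TTheory GRing.Theory Num.Theory.
Local Open Scope ring_scope.

(* Formal power series over a commutative ring R, represented by their
   coefficient sequence: a : nat -> R stands for \sum_n a n t^n. *)
Section FPS.
Variable R : comUnitRingType.

Definition fX : nat -> R := fun n => (n == 1%N)%:R.
Definition fconst (c : R) : nat -> R := fun n => if n == 0%N then c else 0.
Definition fadd (a b : nat -> R) : nat -> R := fun n => a n + b n.
Definition fsub (a b : nat -> R) : nat -> R := fun n => a n - b n.
Definition fscale (c : R) (a : nat -> R) : nat -> R := fun n => c * a n.
Definition fmul (a b : nat -> R) : nat -> R :=
  fun n => \sum_(i < n.+1) a i * b (n - i)%N.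
Fixpoint fpow (a : nat -> R) (k : nat) : nat -> R :=
  match k with 0%N => fconst 1 | k'.+1 => fmul a (fpow a k') end.
(* composition a(h(t)), meaningful when h(0) = 0 *)
Definition fcomp (a h : nat -> R) : nat -> R :=
  fun n => \sum_(k < n.+1) a k * fpow h k n.
(* the exponential series e^t = \sum t^k / k! ; e^{h} is fcomp fexp h *)
Definition fexp : nat -> R := fun k => (k`!%:R)^-1.
(* multiplicative inverse 1/a of a series whose constant term is a unit:
   b_0 = a_0^-1, b_n = - a_0^-1 * \sum_{k=1}^n a_k b_{n-k} *)
Fixpoint fps_inv_seq (a : nat -> R) (n : nat) : seq R :=
  match n with
  | 0%N => [:: (a 0%N)^-1]
  | m.+1 => let s := fps_inv_seq a m in
            rcons s (- (a 0%N)^-1 *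
                     \sum_(1 <= k < m.+2) a k * nth 0 s (m.+1 - k)%N)
  end.
Definition fps_inv (a : nat -> R) : nat -> R := fun n => nth 0 (fps_inv_seq a n) n.
End FPS.

Definition fmap (R S : Type) (phi : R -> S) (a : nat -> R) : nat -> S :=
  fun n => phi (a n).

Definition is_comp_inverse (C : comUnitRingType) (f fb : nat -> C) : Prop :=
  fb 0%N = 0 /\ fcomp f fb = fX C /\ fcomp fb f = fX C.

(* Sheffer sequence for (g, f):
   \sum_n p_n(x) t^n/n! = 1/g(fbar(t)) * e^{x fbar(t)}, computed in {poly C}[[t]] *)
Definition is_sheffer (C : fieldType) (g f : nat -> C) (p : nat -> {poly C}) : Prop :=
  forall fb : nat -> C, is_comp_inverse f fb ->
  forall n : nat,
    (n`!%:R)^-1 * p n =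
    fmul (fps_inv (fmap polyC (fcomp g fb)))
         (fcomp (fexp _) (fun m => 'X * (fb m)%:P)) n.

Definition binpoly (C : fieldType) (y : {poly C}) (n : nat) : {poly C} :=
  (n`!%:R)^-1 *: \prod_(i < n) (y - (i%:R)%:P).

Definition is_eulerian (C : fieldType) (p : nat -> {poly C}) (A : nat -> nat -> C) : Prop :=
  forall n : nat,
    p n = \sum_(k < n.+1) A n k *: binpoly ('X + (n%:R - k%:R - 1)%:P) n.

Definition eulerian_poly (C : fieldType) (A : nat -> nat -> C) (n : nat) : {poly C} :=
  \sum_(k < n.+1) A n k *: 'X^k.

(* Main.v *)
Require Import Defs.
From HB Require Import structures.
From mathcomp Require Import all_boot all_order all_algebra.
Import Order.TTheory GRing.Theory Num.Theory.
From mathcomp Require Import fraction.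
Import FracField.
Local Open Scope ring_scope.
From mathcomp Require Import boolp.
From mathcomp Require Import zify ring.

Section FpsRing.
Variable R : comUnitRingType.
Definition fps := nat -> R.
HB.instance Definition _ := gen_eqMixin fps.
HB.instance Definition _ := gen_choiceMixin fps.

Lemma fmul_poly (a b : nat -> R) (pa pb : {poly R}) n :
  (forall i, (i <= n)%N -> pa`_i = a i) -> (forall i, (i <= n)%N -> pb`_i = b i) ->
  fmul a b n = (pa * pb)`_n.
Proof.
move=> ha hb; rewrite coefM /fmul; apply: eq_bigr => i _.
by rewrite ha ?hb // ?leq_subr // -ltnS.
Qed.

Arguments fmul_poly {a b pa pb n}.
Definition tr n (a : nat -> R) : {poly R} := \poly_(i < n.+1) a i.
Lemma tr_coef n a i : (i <= n)%N -> (tr n a)`_i = a i.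
Proof. by move=> h; rewrite coef_poly ltnS h. Qed.

Lemma fmulC' : commutative (@fmul R).
Proof.
move=> a b; apply: funext => n.
by rewrite (fmul_poly (tr_coef n a) (tr_coef n b)) (fmul_poly (tr_coef n b) (tr_coef n a)) mulrC.
Qed.

Lemma fmulA' : associative (@fmul R).
Proof.
move=> a b c; apply: funext => n.
have hab : forall i, (i <= n)%N -> (tr n a * tr n b)`_i = fmul a b i.
  by move=> i hi; rewrite (@fmul_poly a b (tr n a) (tr n b) i) // => j hj;
   rewrite tr_coef // (leq_trans hj hi).
have hbc : forall i, (i <= n)%N -> (tr n b * tr n c)`_i = fmul b c i.
  by move=> i hi; rewrite (@fmul_poly b c (tr n b) (tr n c) i) // => j hj;
   rewrite tr_coef // (leq_trans hj hi).
rewrite (fmul_poly (tr_coef n a) hbc) (fmul_poly hab (tr_coef n c)).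
by rewrite mulrA.
Qed.

Lemma faddA : associative (@fadd R).
Proof. by move=> a b c; apply: funext => n; rewrite /fadd addrA. Qed.
Lemma faddC : commutative (@fadd R).
Proof. by move=> a b; apply: funext => n; rewrite /fadd addrC. Qed.
Definition fzero : fps := fun _ => 0.
Definition fopp (a : fps) : fps := fun n => - a n.
Lemma fadd0 : left_id fzero (@fadd R).
Proof. by move=> a; apply: funext => n; rewrite /fadd add0r. Qed.
Lemma faddN : left_inverse fzero fopp (@fadd R).
Proof. by move=> a; apply: funext => n; rewrite /fadd addNr. Qed.
HB.instance Definition _ := GRing.isZmodule.Build fps faddA faddC fadd0 faddN.

Lemma fmul1 : left_id (fconst 1 : fps) (@fmul R).
Proof.
move=> a; apply: funext => n; rewrite /fmul big_ord_recl /= /fconst /= mul1r subn0.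
by rewrite big1 ?addr0 // => i _; rewrite mul0r.
Qed.
Lemma fmulD : left_distributive (@fmul R) (@fadd R).
Proof.
move=> a b c; apply: funext => n; rewrite /fmul /fadd -big_split /=.
by apply: eq_bigr => i _; rewrite mulrDl.
Qed.
Lemma fone_neq0 : (fconst 1 : fps) != fzero.
Proof.
apply/eqP => /(congr1 (fun f => f 0%N)); rewrite /fconst /fzero /= => /eqP.
by rewrite oner_eq0.
Qed.
HB.instance Definition _ := GRing.Zmodule_isComNzRing.Build fps fmulA' fmulC' fmul1 fmulD fone_neq0.

Lemma fmulE (a b : nat -> R) : fmul a b = ((a : fps) * b).
Proof. by []. Qed.
Lemma faddE (a b : nat -> R) : fadd a b = ((a : fps) + b).
Proof. by []. Qed.
Lemma foneE : fconst 1 = (1 : fps).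
Proof. by []. Qed.
Lemma fpowE (a : nat -> R) k : fpow a k = (a : fps) ^+ k.
Proof. by elim: k => [|k IH] //=; rewrite exprS -IH. Qed.
Lemma mulE (a b : fps) n : (a * b) n = \sum_(i < n.+1) a i * b (n - i)%N.
Proof. by []. Qed.
Lemma addE (a b : fps) n : (a + b) n = a n + b n.
Proof. by []. Qed.
Lemma oppE (a : fps) n : (- a) n = - a n.
Proof. by []. Qed.
Lemma subE (a b : fps) n : (a - b) n = a n - b n.
Proof. by []. Qed.
Lemma oneE n : (1 : fps) n = (n == 0%N)%:R.
Proof. by rewrite /= /fconst; case: n. Qed.
Lemma zeroE n : (0 : fps) n = 0.
Proof. by []. Qed.
End FpsRing.

Section Basic.
Variable R : comUnitRingType.
Implicit Types a b h : fps R.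

Definition vanish k a := forall i, (i < k)%N -> a i = 0.

Lemma vanish_mul i j a b : vanish i a -> vanish j b -> vanish (i + j) (a * b).
Proof.
move=> ha hb n hn; rewrite mulE big1 // => l _.
have [hl|hl] := ltnP l i; first by rewrite ha // mul0r.
rewrite hb ?mulr0 //; move: (ltn_ord l) hn hl; rewrite ltnS => h1 h2 h3; lia.
Qed.

Lemma vanish0 a : vanish 0 a.
Proof. by []. Qed.

Lemma vanish_exp a k : a 0%N = 0 -> vanish k (a ^+ k).
Proof.
move=> h0; elim: k => [|k IH]; first exact: vanish0.
rewrite exprS -add1n; apply: vanish_mul => //; by case.
Qed.

Lemma vanish_mull k a b : vanish k a -> vanish k (a * b).
Proof. by move=> h; rewrite -[k]addn0; apply: vanish_mul. Qed.

Lemma fcompE (a h : nat -> R) n :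
  fcomp a h n = \sum_(k < n.+1) a k * ((h : fps R) ^+ k) n.
Proof. by rewrite /fcomp; apply: eq_bigr => k _; rewrite fpowE. Qed.

Lemma fcomp_ext (a : nat -> R) h n M : h 0%N = 0 -> (n < M)%N ->
  fcomp a h n = \sum_(k < M) a k * (h ^+ k) n.
Proof.
move=> h0 hM; rewrite fcompE -!(big_mkord xpredT (fun k => a k * (h ^+ k) n)).
rewrite (@big_cat_nat _ _ _ n.+1 0 M _ _ (leq0n _) hM) /= [X in _ = _ + X]big1_seq ?addr0 //.
move=> i /andP [_]; rewrite mem_index_iota => /andP [h1 _].
by rewrite (vanish_exp _ i h0 n h1) mulr0.
Qed.

Lemma size_inv_seq (a : nat -> R) m : size (fps_inv_seq a m) = m.+1.
Proof. by elim: m => [|m IH] //=; rewrite size_rcons IH. Qed.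

Lemma nth_inv_seq (a : nat -> R) m i : (i <= m)%N ->
  nth 0 (fps_inv_seq a m) i = fps_inv a i.
Proof.
elim: m => [|m IH]; first by rewrite leqn0 => /eqP ->.
rewrite leq_eqVlt => /orP [/eqP -> //|hi].
by rewrite /= nth_rcons size_inv_seq hi IH.
Qed.

Lemma fps_invS (a : nat -> R) m : fps_inv a m.+1 =
  - (a 0%N)^-1 * \sum_(1 <= k < m.+2) a k * fps_inv a (m.+1 - k).
Proof.
rewrite {1}/fps_inv /= nth_rcons size_inv_seq ltnn eqxx; congr (_ * _).
rewrite !big_nat; apply: eq_bigr => k /andP [h1 h2]; rewrite nth_inv_seq //.
by rewrite leq_subLR -add1n leq_add2r.
Qed.

Lemma finvP a : a 0%N \is a GRing.unit -> a * fps_inv a = 1.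
Proof.
move=> hu; apply: funext => n; rewrite oneE mulE.
case: n => [|m]; first by rewrite big_ord1 /= /fps_inv /= mulrV.
rewrite big_ord_recl /= subn0 fps_invS mulrA mulrN mulrV // mulN1r.
rewrite big_add1 /= big_mkord.
by apply/eqP; rewrite addrC subr_eq0 eq_sym.
Qed.

Lemma finv_unique a b : a 0%N \is a GRing.unit -> a * b = 1 -> b = fps_inv a.
Proof.
move=> hu hab; rewrite -[b]mulr1 -(finvP _ hu) mulrA [b * a]mulrC hab mul1r //.
Qed.
End Basic.

Lemma rmorph_finv (R S : comUnitRingType) (F : {rmorphism fps R -> fps S}) (a : fps R) :
  a 0%N \is a GRing.unit -> (F a) 0%N \is a GRing.unit ->
  F (fps_inv a) = fps_inv (F a).
Proof.
move=> h1 h2; apply: finv_unique => //; by rewrite -rmorphM finvP // rmorph1.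
Qed.

Section Maps.
Variables R S : comUnitRingType.
Variable phi : {rmorphism R -> S}.
Definition mapf : fps R -> fps S := fun a n => phi (a n).

Lemma mapf_is_zmod : zmod_morphism mapf.
Proof. by move=> a b; apply: funext => n; rewrite /mapf /= rmorphB. Qed.
Lemma mapf_is_monoid : monoid_morphism mapf.
Proof.
split.
  by apply: funext => n; rewrite /mapf !oneE rmorph_nat.
move=> a b; apply: funext => n; rewrite /mapf /= /fmul rmorph_sum.
by apply: eq_bigr => i _; rewrite rmorphM.
Qed.
HB.instance Definition _ := GRing.isZmodMorphism.Build _ _ mapf mapf_is_zmod.
HB.instance Definition _ := GRing.isMonoidMorphism.Build _ _ mapf mapf_is_monoid.

Lemma mapfE a n : mapf a n = phi (a n). Proof. by []. Qed.

Lemma mapf_fcomp (a : nat -> R) (h : fps R) :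
  mapf (fcomp a h) = fcomp (fmap phi a) (mapf h).
Proof.
apply: funext => n; rewrite mapfE !fcompE rmorph_sum; apply: eq_bigr => k _.
by rewrite rmorphM -rmorphXn.
Qed.

Lemma fmap_fexp : (forall k, (k`!%:R : R) \is a GRing.unit) -> fmap phi (fexp R) = fexp S.
Proof. by move=> hu; apply: funext => k; rewrite /fmap /fexp rmorphV // rmorph_nat. Qed.
End Maps.

Section Scale.
Variable R : comUnitRingType.
Variable c : R.
Definition sc : fps R -> fps R := fun a n => c ^+ n * a n.
Lemma sc_is_zmod : zmod_morphism sc.
Proof. by move=> a b; apply: funext => n; rewrite /sc /= subE mulrBr. Qed.
Lemma sc_is_monoid : monoid_morphism sc.
Proof.
split.
  by apply: funext => n; rewrite /sc oneE; case: n => [|n]; rewrite ?mulr1 ?mulr0.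
move=> a b; apply: funext => n; rewrite /sc !mulE mulr_sumr.
apply: eq_bigr => i _; rewrite mulrACA -exprD subnKC //; by rewrite -ltnS.
Qed.
HB.instance Definition _ := GRing.isZmodMorphism.Build _ _ sc sc_is_zmod.
HB.instance Definition _ := GRing.isMonoidMorphism.Build _ _ sc sc_is_monoid.
Lemma scE a n : sc a n = c ^+ n * a n. Proof. by []. Qed.

Lemma sc_fcomp (a : nat -> R) (h : fps R) : sc (fcomp a h) = fcomp a (sc h).
Proof.
apply: funext => n; rewrite scE !fcompE mulr_sumr; apply: eq_bigr => k _.
by rewrite -rmorphXn /= /sc mulrCA.
Qed.
End Scale.

Lemma tri (V : zmodType) (F : nat -> nat -> V) N :
  \sum_(0 <= k < N.+1) \sum_(0 <= i < k.+1) F (k - i)%N i =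
  \sum_(0 <= p < N.+1) \sum_(0 <= q < N.+1 - p) F p q.
Proof.
elim: N => [|N IH].
  by rewrite big_nat1 big_nat1 big_nat1 subn0 big_nat1.
rewrite big_nat_recr //= IH.
rewrite [RHS]big_nat_recr //= subSnn big_nat1.
have -> : \sum_(0 <= i < N.+1) \sum_(0 <= q < N.+2 - i) F i q =
  \sum_(0 <= i < N.+1) (\sum_(0 <= q < N.+1 - i) F i q + F i (N.+1 - i)%N).
  apply: eq_big_nat => p /andP [_ hp]; rewrite (subSn (ltnW hp)) big_nat_recr //.
rewrite big_split /= -addrA; congr (_ + _).
rewrite big_nat_rev big_nat_recr //= add0n subnn subn0; congr (_ + _).
apply: eq_big_nat => i /andP [_ hi].
rewrite subSS; congr (F _ _); lia.
Qed.

Section Exp.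
Variable R : comUnitRingType.
Implicit Types a b h : fps R.
Definition cst (c : R) : fps R := fconst c.

Lemma cstM c a n : (cst c * a) n = c * a n.
Proof.
rewrite mulE big_ord_recl /= /fconst /= subn0 big1 ?addr0 // => i _; by rewrite mul0r.
Qed.
Lemma cstMM c d : cst c * cst d = cst (c * d).
Proof. apply: funext => n; rewrite cstM /cst /fconst; case: (n == 0%N); by rewrite ?mulr0. Qed.

Lemma sumE I (r : seq I) (P : pred I) (F : I -> fps R) n :
  (\sum_(i <- r | P i) F i) n = \sum_(i <- r | P i) F i n.
Proof. exact: (big_morph (fun a : fps R => a n) (fun a b => @addE R a b n) (@zeroE R n)). Qed.

Lemma mulrnE a m n : (a *+ m) n = a n *+ m.
Proof. elim: m => [|m IH]; first by rewrite !mulr0n. by rewrite !mulrS addE IH. Qed.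

Lemma mul_dep a a' b b' n : (forall i, (i <= n)%N -> a i = a' i) ->
  (forall i, (i <= n)%N -> b i = b' i) -> (a * b) n = (a' * b') n.
Proof.
move=> ha hb; rewrite !mulE; apply: eq_bigr => i _.
have hi : (i <= n)%N by rewrite -ltnS.
by rewrite ha // hb // leq_subr.
Qed.

Hypothesis hfu : forall k, (k`!%:R : R) \is a GRing.unit.

Lemma fexp_bin k i : (i <= k)%N ->
  fexp R k * 'C(k, i)%:R = fexp R (k - i)%N * fexp R i.
Proof.
move=> hik; rewrite /fexp -(bin_fact hik) !natrM.
have := hfu k; rewrite -(bin_fact hik) !natrM !unitrM => /andP [hc /andP [hu hv]].
rewrite invrM ?unitrM ?hu ?hv // divrK // invrM // mulrC //.
Qed.

Definition Ex n h : fps R := \sum_(k < n.+1) cst (fexp R k) * h ^+ k.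

Lemma ExE n h i : h 0%N = 0 -> (i <= n)%N -> fcomp (fexp R) h i = Ex n h i.
Proof.
move=> h0 hi; rewrite (@fcomp_ext R (fexp R) h i n.+1 h0) // /Ex sumE.
by apply: eq_bigr => k _; rewrite cstM.
Qed.

Lemma fexpD a b : a 0%N = 0 -> b 0%N = 0 ->
  fcomp (fexp R) (a + b) = (fcomp (fexp R) a : fps R) * fcomp (fexp R) b.
Proof.
move=> a0 b0; have ab0 : (a + b) 0%N = 0 by rewrite addE a0 b0 addr0.
apply: funext => n.
rewrite (ExE n _ _ ab0 (leqnn n)) (@mul_dep _ (Ex n a) _ (Ex n b) n); last 2 first.
- by move=> i hi; rewrite (ExE n _ _ a0 hi).
- by move=> i hi; rewrite (ExE n _ _ b0 hi).
set G := fun p q => fexp R p * fexp R q * (a ^+ p * b ^+ q) n.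
have LHS : Ex n (a + b) n = \sum_(0 <= k < n.+1) \sum_(0 <= i < k.+1) G (k - i)%N i.
  rewrite /Ex sumE big_mkord; apply: eq_bigr => k _.
  rewrite cstM exprDn sumE mulr_sumr big_mkord; apply: eq_bigr => i _.
  rewrite mulrnE -mulr_natr mulrCA fexp_bin; last by rewrite -ltnS.
  by rewrite /G mulrC.
have RHS : (Ex n a * Ex n b) n = \sum_(0 <= p < n.+1) \sum_(0 <= q < n.+1) G p q.
  rewrite /Ex mulr_suml sumE big_mkord; apply: eq_bigr => p _.
  rewrite mulr_sumr sumE big_mkord; apply: eq_bigr => q _.
  by rewrite mulrACA cstMM cstM /G.
rewrite LHS RHS tri; apply: eq_big_nat => p /andP [_ hp].
rewrite (@big_cat_nat _ _ _ (n.+1 - p)%N 0 n.+1) ?leq_subr //=.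
rewrite [X in _ = _ + X]big_nat_cond [X in _ = _ + X]big1 ?addr0 // => q /andP [/andP [h1 h2] _].
rewrite /G (@vanish_mul _ p q _ _ (@vanish_exp R a p a0) (@vanish_exp R b q b0)) ?mulr0 //.
lia.
Qed.
End Exp.

Section Delta.
Variable C : numClosedFieldType.
Implicit Types p q y : {poly C}.

Definition Delta p := p \Po ('X + 1) - p.

Lemma Delta_lin (I : Type) (r : seq I) (F : I -> C) (q : I -> {poly C}) :
  Delta (\sum_(i <- r) F i *: q i) = \sum_(i <- r) F i *: Delta (q i).
Proof.
rewrite /Delta (raddf_sum (comp_poly ('X + 1))) -sumrB; apply: eq_bigr => i _.
by rewrite /= comp_polyZ scalerBr.
Qed.

Lemma iterDelta_lin j (I : Type) (r : seq I) (F : I -> C) (q : I -> {poly C}) :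
  iter j Delta (\sum_(i <- r) F i *: q i) = \sum_(i <- r) F i *: iter j Delta (q i).
Proof. by elim: j => [|j IH] //=; rewrite IH Delta_lin. Qed.

Lemma iterDeltaZ j c p : iter j Delta (c *: p) = c *: iter j Delta p.
Proof.
have := iterDelta_lin j unit [:: tt] (fun _ => c) (fun _ => p).
by rewrite !big_seq1.
Qed.

Lemma fact_unit m : (m`!%:R : C) != 0.
Proof. by rewrite pnatr_eq0 -lt0n fact_gt0. Qed.

Lemma Delta_bin (c : C) m :
  Delta (binpoly ('X + c%:P) m.+1) = binpoly ('X + c%:P) m.
Proof.
rewrite /Delta /binpoly comp_polyZ.
rewrite (rmorph_prod (comp_poly ('X + 1))) /=.
set y := 'X + c%:P.
have hy : forall i : nat, (y - (i%:R)%:P) \Po ('X + 1) = y + 1 - (i%:R)%:P.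
  move=> i; rewrite /y raddfB /= comp_polyD !comp_polyC comp_polyX.
  by congr (_ - _); rewrite addrAC.
rewrite (eq_bigr (fun i : 'I_m.+1 => y + 1 - (i%:R)%:P)); last by move=> i _; rewrite hy.
rewrite big_ord_recl /= subr0.
have -> : \prod_(i < m) (y + 1 - ((bump 0 i)%:R)%:P) = \prod_(i < m) (y - (i%:R)%:P).
  apply: eq_bigr => i _; rewrite /bump /= add1n -addn1 natrD rmorphD /= opprD addrA.
  by rewrite rmorph1; ring.
rewrite big_ord_recr /= -scalerBr.
rewrite [X in _ - X]mulrC -mulrBl.
have -> : y + 1 - (y - (m%:R)%:P) = (m.+1%:R)%:P.
  by rewrite opprB addrC subrKA -natr1 rmorphD rmorph1 addrC.
rewrite mul_polyC scalerA factS natrM invrM ?unitfE ?fact_unit ?pnatr_eq0 //.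
by rewrite -mulrA mulVf ?pnatr_eq0 // mulr1.
Qed.

Lemma Delta1 : Delta 1 = 0.
Proof. by rewrite /Delta comp_polyC subrr. Qed.
Lemma Delta0 : Delta 0 = 0.
Proof. by rewrite /Delta comp_polyC subrr. Qed.

Lemma binpoly0 y : binpoly y 0 = 1.
Proof. by rewrite /binpoly big_ord0 invr1 scale1r. Qed.

Lemma iterDelta_bin (c : C) n j :
  iter j Delta (binpoly ('X + c%:P) n) =
  if (j <= n)%N then binpoly ('X + c%:P) (n - j) else 0.
Proof.
elim: j => [|j IH]; first by rewrite subn0.
rewrite iterS IH; case: (ltngtP j n) => hj /=.
- have -> : (n - j = (n - j.+1).+1)%N by lia.
  by rewrite Delta_bin.
- by rewrite Delta0.
- by rewrite hj subnn binpoly0 Delta1.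
Qed.

Lemma bin_eval (a m : nat) :
  ('C(a, m)%:R : C) = (m`!%:R)^-1 * \prod_(i < m) (a%:R - i%:R).
Proof.
have [hm|hm] := leqP m a.
  apply: (mulfI (fact_unit m)); rewrite mulrA mulfV ?fact_unit // mul1r.
  rewrite -natrM mulnC bin_ffact ffact_prod natr_prod; apply: eq_bigr => i _.
  by rewrite natrB // (leq_trans (ltnW (ltn_ord i)) hm).
rewrite bin_small // (bigD1 (Ordinal hm)) //= subrr mul0r mulr0 //.
Qed.

Lemma binpoly_eval1 (n k m : nat) : (k <= n)%N ->
  (binpoly ('X + (n%:R - k%:R - 1 : C)%:P) m).[1] = 'C(n - k, m)%:R.
Proof.
move=> hk; rewrite bin_eval /binpoly hornerZ horner_prod; congr (_ * _).
apply: eq_bigr => i _; rewrite hornerD hornerN hornerD hornerX !hornerC natrB //; ring.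
Qed.
End Delta.

Lemma comb_sum (F : fieldType) (x : F) (n k N : nat) : 1 - x != 0 ->
  (k <= n)%N -> (n <= N)%N ->
  \sum_(j < N.+1) (x / (1 - x)) ^+ j * ((1 - x) ^+ n *
     (if (j <= n)%N then ('C(n - k, n - j)%:R : F) else 0)) = x ^+ k.
Proof.
move=> hx hk hn.
rewrite -(big_mkord xpredT (fun j => (x / (1 - x)) ^+ j * ((1 - x) ^+ n *
     (if (j <= n)%N then ('C(n - k, n - j)%:R : F) else 0)))).
rewrite (@big_cat_nat _ _ _ n.+1 0 N.+1) //= [X in _ + X = _]big_nat_cond.
rewrite [X in _ + X = _]big1 ?addr0; last first.
  by move=> j /andP [/andP [h1 _] _]; rewrite leqNgt h1 /= !mulr0.
rewrite (@big_cat_nat _ _ _ k 0 n.+1) //=; last by lia.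
rewrite big_nat_cond big1 ?add0r; last first.
  move=> j /andP [/andP [_ h1] _]; rewrite bin_small ?if_same ?mulr0 //.
  lia.
rewrite -{1}[k]add0n big_addn.
have -> : (n.+1 - k = (n - k).+1)%N by lia.
rewrite big_mkord.
rewrite (eq_bigr (fun i : 'I_(n - k).+1 => x ^+ k * ((1 - x) ^+ (n - k - i) * x ^+ i *+ 'C(n - k, i)))).
  by rewrite -mulr_sumr -exprDn subrK expr1n mulr1.
move=> i _.
have hi : (i <= n - k)%N by rewrite -ltnS.
have -> : (i + k <= n)%N by lia.
rewrite (_ : (n - (i + k) = n - k - i)%N); last by lia.
rewrite bin_sub // -mulr_natr.
have -> : (1 - x) ^+ n = (1 - x) ^+ (i + k) * (1 - x) ^+ (n - k - i).
  by rewrite -exprD; congr (_ ^+ _); lia.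
rewrite expr_div_n exprD.
field; by rewrite expf_neq0.
Qed.

Arguments mapf {R S}. Arguments mapfE {R S}. Arguments mapf_fcomp {R S}.
Arguments fmap_fexp {R S}. Arguments sc {R}. Arguments scE {R}. Arguments sc_fcomp {R}.
Arguments fexpD {R}. Arguments cstM {R}. Arguments sumE {R}. Arguments vanish_mul {R}.
Arguments vanish_exp {R}. Arguments cst {R}. Arguments cstMM {R}. Arguments vanish_mull {R}. Arguments finvP {R}. Arguments mul_dep {R}.

Section Main.
Variable C : numClosedFieldType.
Variables (g f fb : nat -> C) (p : nat -> {poly C}) (A : nat -> nat -> C).
Hypothesis g0 : g 0%N != 0.
Hypothesis hinv : is_comp_inverse f fb.
Hypothesis hsh : is_sheffer g f p.
Hypothesis heu : is_eulerian p A.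

Local Notation PC := {poly C}.
Local Notation K := {fraction PC}.

Lemma fb0 : fb 0%N = 0. Proof. by case: hinv. Qed.

Lemma fcomp0 (R : comUnitRingType) (a h : nat -> R) : fcomp a h 0%N = a 0%N.
Proof. by rewrite /fcomp big_ord1 /= /fconst /= mulr1. Qed.

Lemma factPC k : (k`!%:R : PC) \is a GRing.unit.
Proof.
rewrite -(rmorph_nat (@polyC C)); apply: rmorph_unit.
by rewrite unitfE pnatr_eq0 -lt0n fact_gt0.
Qed.

Definition sh : {rmorphism PC -> PC} := comp_poly ('X + 1).
Definition fbP : fps PC := fun m => 'X * (fb m)%:P.
Definition cb : fps PC := fun m => (fb m)%:P.
Definition eX : fps PC := fcomp (fexp PC) fbP.
Definition Ecb : fps PC := fcomp (fexp PC) cb.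
Definition G0 : fps PC := fps_inv (fmap polyC (fcomp g fb)).
Definition Q : fps PC := G0 * eX.

Lemma hQ n : Q n = (n`!%:R)^-1 * p n.
Proof. by rewrite (hsh fb hinv n). Qed.

Lemma G0unit : (fmap polyC (fcomp g fb)) 0%N \is a GRing.unit.
Proof. by rewrite /fmap fcomp0; apply: rmorph_unit; rewrite unitfE. Qed.

Lemma A1 : mapf sh eX = eX * Ecb.
Proof.
rewrite /eX mapf_fcomp fmap_fexp; last exact: factPC.
have -> : mapf sh fbP = fbP + cb.
  apply: funext => m; rewrite mapfE addE /sh /fbP /cb /= comp_polyM comp_polyX comp_polyC.
  by rewrite mulrDl mul1r.
by rewrite (fexpD factPC) // /fbP /cb fb0 ?mulr0.
Qed.

Lemma A3 : mapf sh Ecb = Ecb.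
Proof.
rewrite /Ecb mapf_fcomp fmap_fexp; last exact: factPC.
congr fcomp; apply: funext => m; by rewrite mapfE /sh /cb /= comp_polyC.
Qed.

Lemma A2 : mapf sh G0 = G0.
Proof.
rewrite /G0 rmorph_finv ?G0unit //; last first.
  by rewrite /= /fmap comp_polyC; exact: G0unit.
congr fps_inv; apply: funext => m; by rewrite /= /fmap /= comp_polyC.
Qed.

Definition D (T : fps PC) : fps PC := mapf sh T - T.

Lemma DQ : D Q = (Ecb - 1) * Q.
Proof. by rewrite /D /Q rmorphM /= A2 A1; ring. Qed.

Lemma iterDQ j : iter j D Q = (Ecb - 1) ^+ j * Q.
Proof.
elim: j => [|j IH]; first by rewrite expr0 mul1r.
rewrite iterS IH {1}/D rmorphM /= rmorphXn rmorphB rmorph1.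
rewrite [X in (X - 1)](_ : _ = Ecb); last exact: A3.
rewrite -mulrBr.
by rewrite -/(D Q) DQ exprSr mulrA.
Qed.

Lemma iterD_coef j T n : (iter j D T) n = iter j (@Delta C) (T n).
Proof. by elim: j => [|j IH] //=; rewrite /D subE mapfE IH. Qed.

Lemma coefPC j n : ((Ecb - 1) ^+ j * Q) n = iter j (@Delta C) ((n`!%:R)^-1 * p n).
Proof. by rewrite -iterDQ iterD_coef hQ. Qed.
End Main.
Arguments cb {C}. Arguments fbP {C}. Arguments eX {C}. Arguments Ecb {C}. Arguments G0 {C}.
Arguments Q {C}. Arguments factPC {C}. Arguments G0unit {C}. Arguments coefPC {C}. Arguments fcomp0 {R}.

Section FX.
Variable R : comUnitRingType.
Lemma fXmul (a : fps R) n : ((fX R : fps R) * a) n = if n is n'.+1 then a n' else 0.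
Proof.
rewrite mulE; case: n => [|n]; first by rewrite big_ord1 /fX /= mul0r.
rewrite big_ord_recl /= /fX /= mul0r add0r big_ord_recl /= mul1r subSS subn0.
by rewrite big1 ?addr0 // => i _; rewrite mul0r.
Qed.
Lemma fXpow k n : ((fX R : fps R) ^+ k) n = (n == k)%:R.
Proof.
elim: k n => [|k IH] n; first by rewrite expr0 oneE.
by rewrite exprS fXmul; case: n => [|n] //; rewrite IH.
Qed.
Lemma fcomp_fX (a : nat -> R) : fcomp a (fX R) = a.
Proof.
apply: funext => n; rewrite fcompE big_ord_recr /= fXpow eqxx mulr1 big1 ?add0r //.
by move=> i _; rewrite fXpow /= (gtn_eqF (ltn_ord i)) mulr0.
Qed.
Lemma fscale_fX c : fscale c (fX R) = sc c (fX R).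
Proof.
apply: funext => n; rewrite scE /fscale /fX; case: n => [|[|n]] //=; by rewrite ?mulr0 ?expr1.
Qed.
End FX.

Section Main2.
Variable C : numClosedFieldType.
Variables (g f fb : nat -> C) (p : nat -> {poly C}) (A : nat -> nat -> C).
Hypothesis g0 : g 0%N != 0.
Hypothesis hinv : is_comp_inverse f fb.
Hypothesis hsh : is_sheffer g f p.
Hypothesis heu : is_eulerian p A.

Local Notation PC := {poly C}.
Local Notation K := {fraction PC}.

Definition x : K := tofrac ('X : PC).
Definition emb' : {rmorphism C -> K} := @tofrac PC \o polyC.
Definition phi : {rmorphism PC -> K} := @tofrac PC \o polyC \o horner_eval 1.
Definition u : fps K := fcomp (fmap (fun c => tofrac c%:P) fb) (fscale (1 - x) (fX K)).
Definition E : fps K := fcomp (fexp K) u.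
Definition G : fps K := fps_inv (fcomp (fmap (fun c => tofrac c%:P) g) u).
Definition Phi (T : fps PC) : fps K := sc (1 - x) (mapf phi T).

Lemma u_eq : u = sc (1 - x) (mapf emb' fb).
Proof. by rewrite /u fscale_fX -sc_fcomp fcomp_fX. Qed.

Lemma natK_neq0 k : (k%:R : K) != 0 = (k != 0%N).
Proof. by rewrite -(rmorph_nat emb') fmorph_eq0 pnatr_eq0. Qed.

Lemma PhiM a b : Phi (a * b) = Phi a * Phi b.
Proof. by rewrite /Phi !rmorphM. Qed.

Lemma mapf_phi_cb : mapf phi (cb fb) = mapf emb' fb.
Proof. by apply: funext => m; rewrite !mapfE /cb /phi /= horner_evalE hornerC. Qed.
Lemma mapf_phi_fbP : mapf phi (fbP fb) = mapf emb' fb.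
Proof. by apply: funext => m; rewrite !mapfE /fbP /phi /= horner_evalE hornerM hornerX hornerC mul1r. Qed.

Lemma PhiE_gen (h : fps PC) : mapf phi h = mapf emb' fb -> Phi (fcomp (fexp PC) h) = E.
Proof.
move=> hh; rewrite /Phi mapf_fcomp fmap_fexp; last exact: factPC.
by rewrite hh sc_fcomp -u_eq.
Qed.

Lemma Phi_Ecb : Phi (Ecb fb) = E.
Proof. exact: PhiE_gen mapf_phi_cb. Qed.
Lemma Phi_eX : Phi (eX fb) = E.
Proof. exact: PhiE_gen mapf_phi_fbP. Qed.

Lemma Phi_G0 : Phi (G0 g fb) = G.
Proof.
rewrite /Phi /G0 rmorph_finv; last 2 first.
- exact: G0unit.
- by rewrite /= /fmap fcomp0 /= horner_evalE hornerC unitfE tofrac_eq0 polyC_eq0.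
rewrite rmorph_finv; last 2 first.
- by rewrite /= /fmap fcomp0 /= horner_evalE hornerC unitfE tofrac_eq0 polyC_eq0.
- by rewrite /= scE expr0 mul1r mapfE /fmap fcomp0 /= horner_evalE hornerC unitfE tofrac_eq0 polyC_eq0.
rewrite /=.
rewrite /G u_eq -sc_fcomp; congr (fps_inv (sc _ _)).
have -> : mapf phi (fmap polyC (fcomp g fb)) = mapf emb' (fcomp g fb).
  by apply: funext => m; rewrite !mapfE /fmap /phi /= horner_evalE hornerC.
by rewrite mapf_fcomp.
Qed.

Lemma PhiB a b : Phi (a - b) = Phi a - Phi b.
Proof. by rewrite /Phi !rmorphB. Qed.
Lemma Phi1 : Phi 1 = 1.
Proof. by rewrite /Phi !rmorph1. Qed.
Lemma PhiX a j : Phi (a ^+ j) = Phi a ^+ j.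
Proof. by rewrite /Phi !rmorphXn. Qed.
Lemma PhiE T n : Phi T n = (1 - x) ^+ n * phi (T n).
Proof. by []. Qed.

Lemma PhiQ : Phi (Q g fb) = G * E.
Proof. by rewrite /Q PhiM Phi_G0 Phi_eX. Qed.

Lemma phiE q : phi q = emb' q.[1].
Proof. by rewrite /= horner_evalE. Qed.

Lemma coefK j n : ((E - 1) ^+ j * (G * E)) n = (1 - x) ^+ n * ((n`!%:R)^-1 *
   \sum_(k < n.+1) emb' (A n k) * (if (j <= n)%N then 'C(n - k, n - j)%:R else 0)).
Proof.
rewrite -PhiQ -Phi_Ecb -Phi1 -PhiB -PhiX -PhiM PhiE (coefPC _ _ _ _ g0 hinv hsh) heu.
congr (_ * _).
rewrite -(rmorph_nat (@polyC C)) polyCV mul_polyC iterDeltaZ iterDelta_lin.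
rewrite phiE hornerZ horner_sum rmorphM fmorphV rmorph_nat rmorph_sum; congr (_ * _).
apply: eq_bigr => k _; rewrite hornerZ rmorphM iterDelta_bin; congr (_ * _).
case: ifP => hj; last by rewrite horner0 rmorph0.
by rewrite binpoly_eval1 ?rmorph_nat // -ltnS.
Qed.

Lemma hx : 1 - x != 0.
Proof.
rewrite /x -(rmorph1 (@tofrac PC)) -rmorphB /= tofrac_eq0.
apply/eqP => /(congr1 (fun q : PC => q`_1)); rewrite coefB coef1 coefX /= sub0r coef0.
by move/eqP; rewrite oppr_eq0 oner_eq0.
Qed.

Definition S : fps K := fun n => tofrac (eulerian_poly A n) / (n`!)%:R.
Definition y : K := x / (1 - x).
Definition z : fps K := cst y * (E - 1).

Lemma cstX (c : K) j : cst (c ^+ j) = cst c ^+ j.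
Proof. elim: j => [|j IH]; first by []. by rewrite !exprS -cstMM IH. Qed.

Lemma S_coef N n : (n <= N)%N -> S n = (\sum_(j < N.+1) z ^+ j * (G * E)) n.
Proof.
move=> hn; rewrite sumE.
under eq_bigr => j _ do rewrite /z exprMn -cstX -mulrA cstM coefK.
set c := (n`!%:R)^-1.
rewrite (eq_bigr (fun j : 'I_N.+1 => c * \sum_(k < n.+1) emb' (A n k) *
   ((x / (1 - x)) ^+ j * ((1 - x) ^+ n *
     (if (j <= n)%N then ('C(n - k, n - j)%:R : K) else 0))))); last first.
  move=> j _; rewrite /y; set T := \sum_(k < n.+1) _.
  transitivity (c * ((x / (1 - x)) ^+ j * (1 - x) ^+ n * T)); first by ring.
  congr (_ * _); rewrite /T mulr_sumr; apply: eq_bigr => k _; by rewrite [LHS]mulrCA !mulrA.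
rewrite -mulr_sumr exchange_big /=.
rewrite (eq_bigr (fun k : 'I_n.+1 => emb' (A n k) * x ^+ k)); last first.
  move=> k _; rewrite -mulr_sumr comb_sum //; [exact: hx | by rewrite -ltnS].
rewrite /S mulrC; congr (_ * _); rewrite /eulerian_poly rmorph_sum; apply: eq_bigr => k _.
by rewrite /= -mul_polyC tofracM tofracXn.
Qed.

Lemma cstB (a b : K) : cst (a - b) = cst a - cst b.
Proof. by apply: funext => n; rewrite subE /cst /fconst; case: (n == 0%N); rewrite ?subr0. Qed.

Lemma E0 : E 0%N = 1.
Proof. by rewrite /E fcomp0 /fexp invr1. Qed.

Lemma z0 : z 0%N = 0.
Proof. by rewrite /z cstM subE E0 subrr mulr0. Qed.

Lemma SP : S * (1 - cst x * E) = cst (1 - x) * E * G.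
Proof.
apply: funext => n.
rewrite (@mul_dep _ _ ((\sum_(j < n.+1) z ^+ j) * (G * E)) _ (1 - cst x * E) n); last 2 first.
- by move=> i hi; rewrite (@S_coef n i hi) mulr_suml.
- by [].
have hP : 1 - cst x * E = cst (1 - x) * (1 - z).
  have h1 : cst (1 - x) * cst y = cst x by rewrite cstMM /y mulrC divfK ?hx.
  by rewrite /z mulrBr mulrA h1 cstB (_ : cst 1 = 1) // mulr1 mulrBr mulr1 opprB addrA subrK.
rewrite hP.
have -> : (\sum_(j < n.+1) z ^+ j) * (G * E) * (cst (1 - x) * (1 - z)) =
          (1 - z ^+ n.+1) * (cst (1 - x) * E * G).
  have ht : (1 - z) * (\sum_(j < n.+1) z ^+ j) = 1 - z ^+ n.+1.
    by rewrite -[1 - z]opprB mulNr -subrX1 opprB.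
  rewrite -ht; ring.
rewrite mulrBl mul1r subE.
by rewrite (@vanish_mull _ n.+1 (z ^+ n.+1) (cst (1 - x) * E * G) (vanish_exp z n.+1 z0) n (ltnSn n)) subr0.
Qed.

Lemma final : S = fmul (fmul (fscale (1 - x) E) G) (fps_inv (fsub (fconst 1) (fscale x E))).
Proof.
have fs : forall c (a : fps K), fscale c a = cst c * a.
  by move=> c a; apply: funext => n; rewrite cstM.
have -> : fsub (fconst 1) (fscale x E) = 1 - cst x * E.
  by apply: funext => n; rewrite subE cstM.
rewrite fs !fmulE -SP -mulrA finvP ?mulr1 //.
by rewrite subE cstM E0 oneE mulr1 unitfE hx.
Qed.
End Main2.

Theorem theorem3p3 (C : numClosedFieldType) (g f fb : nat -> C)
  (p : nat -> {poly C}) (A : nat -> nat -> C) :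
  g 0%N != 0 -> f 0%N = 0 -> f 1%N != 0 ->
  is_comp_inverse f fb ->
  is_sheffer g f p ->
  is_eulerian p A ->
  let K := {fraction {poly C}} in
  let x : K := tofrac ('X : {poly C}) in
  let emb : C -> K := fun c => tofrac c%:P in
  let u : nat -> K := fcomp (fmap emb fb) (fscale (1 - x) (fX K)) in
  let E : nat -> K := fcomp (fexp K) u in
  (fun n => tofrac (eulerian_poly A n) / (n`!)%:R)
  = fmul (fmul (fscale (1 - x) E) (fps_inv (fcomp (fmap emb g) u)))
         (fps_inv (fsub (fconst 1) (fscale x E))).
Proof.
move=> hg0 _ _ hinv hsh heu.
intros K x0 emb u0 E1.
exact (@final C g f fb p A hg0 hinv hsh heu).
Qed.
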